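(* In the compulsory constrained two-facility location setting described in the context, for every location profile $\mathbf{x}\in\mathbb{R}^n$ there exists an optimal solution for the sum cost objective (minimizing $\sum_{j=1}^n \max\{|y_1-x_j|,|y_2-x_j|\}$ over feasible $(y_1,y_2)$) that belongs to $AP$, i.e. whose two facility locations are $\{a_k,a_{k+1}\}$ for some $k$.
   Context: $n$ agents have locations $x_1,\dots,x_n\in\mathbb{R}$. $A=\{a_1\le a_2\le\dots\le a_m\}$ is a multiset of alternative locations, $m\ge2$; a feasible outcome places $F_1$ at $y_1\in A$ and $F_2$ at $y_2\in A\setminus\{y_1\}$ (removing one copy from the multiset). Each agent is served by both facilities, with cost $\max\{|y_1-x_j|,|y_2-x_j|\}$. $AP=\{(a_1,a_2),(a_2,a_3),\dots,(a_{m-1},a_m)\}$ (a pair is identified with placing the two facilities at its two entries, in either order). *)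

(* Defs.v *)
From mathcomp Require Import all_boot all_order all_algebra.
Set Implicit Arguments. Unset Strict Implicit. Unset Printing Implicit Defensive.
Import Order.TTheory GRing.Theory Num.Theory.
Local Open Scope ring_scope.

Definition agent_cost (R : realFieldType) (y1 y2 xj : R) : R :=
  Num.max `|y1 - xj| `|y2 - xj|.

Definition sum_cost (R : realFieldType) (n : nat) (x : 'I_n -> R) (y1 y2 : R) : R :=
  \sum_(j < n) agent_cost y1 y2 (x j).

(* The multiset A is a sorted seq; a feasible outcome uses two distinct
   copies (distinct positions) of A. *)
Definition feasible (R : realFieldType) (A : seq R) (y1 y2 : R) : Prop :=
  exists i j : nat, [/\ (i < size A)%N, (j < size A)%N, i <> j,
                        y1 = nth 0 A i & y2 = nth 0 A j].

Definition in_AP (R : realFieldType) (A : seq R) (y1 y2 : R) : Prop :=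
  exists k : nat, (k.+1 < size A)%N /\
    ((y1 = nth 0 A k /\ y2 = nth 0 A k.+1) \/
     (y1 = nth 0 A k.+1 /\ y2 = nth 0 A k)).

(* Main.v *)
Require Import Defs.
From mathcomp Require Import all_boot all_order all_algebra.
From mathcomp Require Import zify.
Import Order.TTheory GRing.Theory Num.Theory.
Local Open Scope ring_scope.

Lemma mid_le (R : realFieldType) (a b c x : R) :
  a <= b -> b <= c -> `|b - x| <= Num.max `|a - x| `|c - x|.
Proof.
move=> hab hbc.
case: (boolP (x <= b)) => hx.
  have e : `|b - x| = b - x by rewrite ger0_norm // subr_ge0.
  have h2 : c - x <= `|c - x| by exact: ler_norm.
  have h1 : b - x <= c - x by rewrite lerD2r.
  by rewrite e le_max (le_trans h1 h2) orbT.
have e : `|b - x| = x - b.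
  by rewrite distrC ger0_norm // subr_ge0 ltW // ltNge.
have h2 : x - a <= `|a - x| by rewrite distrC; exact: ler_norm.
have h1 : x - b <= x - a by rewrite lerD2l lerN2.
by rewrite e le_max (le_trans h1 h2).
Qed.

Lemma exists_min (R : realFieldType) (f : nat -> R) (s : seq nat) :
  s != [::] -> exists2 k, k \in s & forall k', k' \in s -> f k <= f k'.
Proof.
elim: s => [//|a s IH] _.
case: (eqVneq s [::]) => [->|hs].
  by exists a => [|k']; rewrite ?mem_seq1 // => /eqP ->.
have [k hk hmin] := IH hs.
case: (lerP (f a) (f k)) => h.
  exists a; first by rewrite mem_head.
  move=> k'; rewrite in_cons => /orP [/eqP -> //|/hmin]; exact: le_trans h.
exists k; first by rewrite in_cons hk orbT.
move=> k'; rewrite in_cons => /orP [/eqP -> |/hmin //]; exact: ltW h.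
Qed.

Lemma sum_costC (R : realFieldType) (n : nat) (x : 'I_n -> R) y1 y2 :
  sum_cost x y1 y2 = sum_cost x y2 y1.
Proof. by apply: eq_bigr => j _; rewrite /agent_cost maxC. Qed.

Theorem lemma2 (R : realFieldType) (n : nat) (x : 'I_n -> R) (A : seq R)
    (hA : sorted <=%R A) (hm : (2 <= size A)%N) :
  exists y1 y2 : R,
    [/\ feasible A y1 y2, in_AP A y1 y2 &
        forall z1 z2 : R, feasible A z1 z2 ->
          sum_cost x y1 y2 <= sum_cost x z1 z2].
Proof.
pose f k := sum_cost x (nth 0 A k) (nth 0 A k.+1).
have hs : iota 0 (size A).-1 != [::].
  by rewrite -size_eq0 size_iota; case: (size A) hm => [|[|]].
have [k hk hmin] := @exists_min _ f _ hs.
rewrite mem_iota add0n in hk; move/andP: hk => [_ hk].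
have hk1 : (k.+1 < size A)%N by lia.
have mono : forall i j, (i <= j)%N -> (j < size A)%N -> nth 0 A i <= nth 0 A j.
  move=> i j hij hj; apply: (sorted_leq_nth le_trans lexx) => //; rewrite inE /=; lia.
have key : forall i j, (i < j)%N -> (j < size A)%N ->
    f k <= sum_cost x (nth 0 A i) (nth 0 A j).
  move=> i j hij hj.
  have hi : i \in iota 0 (size A).-1 by rewrite mem_iota; lia.
  apply: (le_trans (hmin _ hi)).
  apply: ler_sum => j0 _; rewrite /agent_cost.
  rewrite ge_max le_max lexx /=.
  apply: mid_le; apply: mono; lia.
exists (nth 0 A k), (nth 0 A k.+1); split.
- by exists k, k.+1; split => //; lia.
- by exists k; split => //; left.
move=> z1 z2 [i [j [hi hj hij -> ->]]].
case: (ltngtP i j) => h.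
- exact: key.
- rewrite (@sum_costC _ _ x (nth 0 A i)); exact: key.
- by [].
Qed.
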